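(* Let $\Sigma$ be a Riemann surface and let $I_1,I_2$ be clean subsets of $\Sigma_{\mathbb{C}}$. Then $I_1\cup I_2$ is clean if and only if at least one of the following holds: (1) $I_1$ and $I_2$ are both conjugation invariant; (2) $I_i\cap\overline{I_j}=\emptyset$ for all $1\le i,j\le 2$; (3) $I_1=\overline{I_2}$; (4) $I_1\subset I_2$ or $I_2\subset I_1$.
   Context: For a Riemann surface $(\Sigma,j)$ write $\overline{\Sigma}=(\Sigma,-j)$. The complex double $\Sigma_{\mathbb{C}}=\Sigma\cup\overline{\Sigma}$ is obtained by gluing along the boundary by the identity, with complex structure restricting to $j$ on $\Sigma$ and $-j$ on $\overline\Sigma$; it carries an anti-holomorphic involution $z\mapsto\bar z$ exchanging the two copies, and for $S\subset\Sigma_{\mathbb{C}}$, $\overline S$ denotes its image. $S$ is conjugation invariant if $S=\overline S$, and clean if either $S=\overline{S}$ or $S\cap\overline{S}=\emptyset$. *)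

(* Defs.v *)
From mathcomp Require Import all_boot.
From mathcomp Require Import boolp classical_sets.
Set Implicit Arguments. Unset Strict Implicit. Unset Printing Implicit Defensive.
Local Open Scope classical_set_scope.

(* Underlying point set of the complex cdouble Sigma_C = Sigma U conj(Sigma),
   glued along the boundary [bd] by the identity.  A point is a point [x] of
   Sigma together with a side: [false] = the copy Sigma, [true] = the copy
   conj(Sigma); boundary points only occur once (on side [false]). *)
Record cdouble (S : Type) (bd : set S) := DPt {
  dbase : S;
  dside : bool;
  dside_ok : dside -> ~ bd dbase }.

Definition side_false_ok (S : Type) (bd : set S) (x : S) :
  (false : bool) -> ~ bd x := fun h => match notF h with end.

Definition dconj (S : Type) (bd : set S) (p : cdouble bd) : cdouble bd :=
  match p with
  | DPt x true _ => @DPt S bd x false (@side_false_ok S bd x)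
  | DPt x false _ =>
      match pselect (bd x) with
      | left _ => p
      | right nb => @DPt S bd x true (fun _ => nb)
      end
  end.

Definition dbar (S : Type) (bd : set S) (A : set (cdouble bd)) : set (cdouble bd) :=
  (@dconj S bd) @` A.

Definition conj_invariant (S : Type) (bd : set S) (A : set (cdouble bd)) : Prop :=
  A = dbar A.

Definition clean (S : Type) (bd : set S) (A : set (cdouble bd)) : Prop :=
  A = dbar A \/ A `&` dbar A = set0.

(* Main.v *)
Require Import Defs.
From mathcomp Require Import all_boot.
From mathcomp Require Import boolp classical_sets.
Local Open Scope classical_set_scope.

Lemma dconjK (S : Type) (bd : set S) : involutive (@dconj S bd).
Proof.
case=> x [] h /=.
  case: pselect => [b|nb]; first by exfalso; exact: (h isT).
  by congr DPt; apply: Prop_irrelevance.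
case: pselect => [b|nb] /=; first by case: pselect => //.
by congr DPt; apply: Prop_irrelevance.
Qed.

Lemma dbarE (S : Type) (bd : set S) (A : set (cdouble bd)) :
  dbar A = [set p | A (dconj p)].
Proof.
apply/seteqP; split => p /=.
  by case=> q Aq <-; rewrite dconjK.
by move=> Ap; exists (dconj p) => //; rewrite dconjK.
Qed.

Lemma eqsetP T (A B : set T) : A = B <-> (forall x, A x <-> B x).
Proof.
split; first by move=> ->.
by move=> H; apply/funext => x; apply/propext.
Qed.

Lemma disjP T (A B : set T) : A `&` B = set0 <-> (forall x, A x -> B x -> False).
Proof.
split.
  by move=> H x a b; have : (A `&` B) x by []; rewrite H.
by move=> H; apply/funext => x; apply/propext; split => //; case=> a b; exact: H x a b.
Qed.

Theorem lemma2p7 (S : Type) (bd : set S) (I1 I2 : set (cdouble bd)) :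
  clean I1 -> clean I2 ->
  (clean (I1 `|` I2) <->
   [\/ conj_invariant I1 /\ conj_invariant I2,
       (forall i j : bool,
          (if i then I2 else I1) `&` dbar (if j then I2 else I1) = set0),
       I1 = dbar I2
     | I1 `<=` I2 \/ I2 `<=` I1]).
Proof.
have K := @dconjK S bd.
have E : (forall i j : bool,
          (if i then I2 else I1) `&` dbar (if j then I2 else I1) = set0) <->
        (forall x, (I1 x \/ I2 x) -> (I1 (dconj x) \/ I2 (dconj x)) -> False).
  split.
    move=> H x [a|a] [b|b].
    - by move/disjP: (H false false) => /(_ x a); rewrite dbarE; apply.
    - by move/disjP: (H false true) => /(_ x a); rewrite dbarE; apply.
    - by move/disjP: (H true false) => /(_ x a); rewrite dbarE; apply.
    - by move/disjP: (H true true) => /(_ x a); rewrite dbarE; apply.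
  move=> H i j; apply/disjP => x; rewrite dbarE /=.
  by case: i; case: j => a b; apply: (H x); auto.
rewrite (propext E) => {E}.
rewrite /clean /conj_invariant !dbarE !(propext (disjP _ _ _)) !(propext (eqsetP _ _ _)) /=.
move=> C1 C2; split.
  case=> [U|D]; last by apply: Or42.
  case: C1 => C1; case: C2 => C2.
  - by apply: Or41.
  - apply: Or44; right => x I2x.
    have : I1 (dconj x) \/ I2 (dconj x) by apply: (proj1 (U x)); right.
    case=> h; first by apply: (proj2 (C1 x)).
    by exfalso; apply: (C2 (dconj x) h); rewrite K.
  - apply: Or44; left => x I1x.
    have : I1 (dconj x) \/ I2 (dconj x) by apply: (proj1 (U x)); left.
    case=> h; last by apply: (proj2 (C2 x)).
    by exfalso; apply: (C1 (dconj x) h); rewrite K.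
  - apply: Or43 => x; split => h.
      have : I1 (dconj x) \/ I2 (dconj x) by apply: (proj1 (U x)); left.
      by case=> // h'; exfalso; apply: (C1 x).
    have : I1 (dconj (dconj x)) \/ I2 (dconj (dconj x)) by apply: (proj1 (U (dconj x))); right.
    by rewrite K; case=> // h'; exfalso; apply: (C2 (dconj x)); rewrite ?K.
case=> [[A B]|D|E|[L|L]].
- by left => x; rewrite A B.
- by right.
- left => x; split.
    case=> h; [right|left]; first by apply: (proj1 (E x)).
    by apply: (proj2 (E (dconj x))); rewrite K.
  case=> h; [right|left]; last by apply: (proj2 (E x)).
  by rewrite -[x]K; apply: (proj1 (E (dconj x))).
- case: C2 => C2; [left|right] => x.
    split; case=> h; right; first (by apply: (proj1 (C2 x)); apply: L);
      try (by apply: (proj1 (C2 x))).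
      by apply: (proj2 (C2 x)); apply: L.
    by apply: (proj2 (C2 x)).
  move=> h h'; apply: (C2 x).
    by case: h => h; [exact: L h|exact: h].
  by case: h' => h'; [exact: L h'|exact: h'].
- case: C1 => C1; [left|right] => x.
    split; case=> h; left; first (by apply: (proj1 (C1 x))).
      by apply: (proj1 (C1 x)); apply: L.
      by apply: (proj2 (C1 x)).
    by apply: (proj2 (C1 x)); apply: L.
  move=> h h'; apply: (C1 x).
    by case: h => h; [exact: h|exact: L h].
  by case: h' => h'; [exact: h'|exact: L h'].
Qed.
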